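(* Let $T=\{\!\{T_1,\dots,T_m\}\!\}$ where each $T_j$ is a $G_j$-join tree with $G_j$ a finite subgraph of $\mathsf{Path}_{\mathbb Z}$. Then for every shift permutation $\sigma$ of $[m]$ and every $h\in[m]$: (i) $\Psi(T)\ge\Psi(T_{\sigma(1)})+\vec\Delta(G_{\sigma(2)},\dots,G_{\sigma(m)}\mid G_{\sigma(1)})$; (ii) $\Psi(T)\ge\Psi(T_{\sigma(h)})+\vec\Delta(G_{\sigma(h+1)},\dots,G_{\sigma(m)}\mid G_{\sigma(1)}\cup\dots\cup G_{\sigma(h)})$; (iii) $\Psi(T)\ge\Psi(T_j\ominus F_j)-\Delta(G_j\ominus F_j)+\vec\Delta(G_{\tilde\sigma_j(1)},\dots,G_{\tilde\sigma_j(m)})$, where $j:=\sigma(h)$ and $F_j:=G_{\sigma(1)}\cup\dots\cup G_{\sigma(h-1)}$.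
   Context: Graphs are finite simple graphs without isolated vertices; $\emptyset$ is the empty graph. $\mathsf{Path}_{\mathbb Z}$ has vertex set $\mathbb Z$ and edges $\{i-1,i\}$. $\Delta(G)$ = number of connected components; $G\ominus F$ = union of components of $G$ sharing no vertex with $F$; $\vec\Delta(H_1,\dots,H_r\mid F)=\sum_{l=1}^r\Delta(H_l\ominus(F\cup H_1\cup\dots\cup H_{l-1}))$ and $\vec\Delta(H_1,\dots,H_r)=\vec\Delta(H_1,\dots,H_r\mid\emptyset)$. Join trees: for finite $G\subset\mathsf{Path}_{\mathbb Z}$, a $G$-join tree is a finite rooted binary tree (each non-leaf has an ordered left and right child) with nodes labeled by subgraphs of $G$: leaves by single-edge subgraphs of $G$ or $\emptyset$, each non-leaf by the union of its children's labels, the root by $G$. $T_1\cup T_2$ is the join tree with a new root whose left subtree is $T_1$ and right subtree $T_2$. $\{\!\{T_1\}\!\}=T_1$ and $\{\!\{T_1,\dots,T_m\}\!\}=\{\!\{T_1,\dots,T_{m-1}\}\!\}\cup\{\!\{T_1,\dots,T_{m-2},T_m\}\!\}$ for $m\ge2$. For a $G$-join tree $S$ and a graph $F$, $S\ominus F$ is the $(G\ominus F)$-join tree obtained from $S$ by relabeling to $\emptyset$ every leaf whose label is an edge not in $G\ominus F$ (and relabeling each non-leaf by the union of its children's labels). Branch coverings and $\Psi$: for a $G$-join tree $S$ and a root-to-leaf path $b_1,\dots,b_\ell$, let $B_j$ ($j<\ell$) be the label of the child of $b_j$ other than $b_{j+1}$, and $B_\ell$ the label of leaf $b_\ell$; $\{B_1,\dots,B_\ell\}$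 is an $S$-branch covering. $\Psi(S)$ is the maximum of $\vec\Delta(C_1,\dots,C_r)$ over all $S$-branch coverings $\mathcal C$ and all enumerations $C_1,\dots,C_r$ (without repetition) of $\mathcal C$. Shift permutations: a permutation $\sigma$ of $[m]$ with $\sigma(j)\ge j-1$ for all $j$. For $I\subseteq[m]$ with $m\in I$, $I=\{i_1<\dots<i_p\}$, $i_0:=0$, let $\sigma_I(j)=i_h$ if $j=i_{h-1}+1$ for some $h$, and $\sigma_I(j)=j-1$ otherwise; every shift permutation equals $\sigma_I$ for exactly one such $I$. For $\sigma=\sigma_I$ and $j\in[m]$, $\tilde\sigma_j:=\sigma_{\tilde I_j}$ with $\tilde I_j=I\cup[i_{h-1}]$ if $j=i_h\in I$ and $\tilde I_j=I\cup[j-1]$ if $j\notin I$. *)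

(* Defs.v *)
From mathcomp Require Import all_boot all_order all_algebra.
From mathcomp Require Import finmap.
Set Implicit Arguments. Unset Strict Implicit. Unset Printing Implicit Defensive.
Import GRing.Theory Num.Theory.
Local Open Scope fset_scope.

(* A finite subgraph of Path_Z (without isolated vertices) is represented by
   its finite set of edges; the integer i stands for the edge {i-1, i}. *)
Definition graph := {fset int}.

Definition vert (G : graph) : {fset int} := G `|` [fset (i - 1)%R | i in G].

Definition segment (e f : int) : seq int :=
  [seq (Order.min e f + k%:Z)%R | k <- iota 0 (`|(f - e)%R|%N).+1].

(* two edges e, f of G are in the same connected component of G iff every
   edge between them belongs to G (consecutive edges i, i+1 share vertex i) *)
Definition conn (G : graph) (e f : int) : bool := all (fun k => k \in G) (segment e f).

Definition comp (G : graph) (e : int) : graph := [fset f in G | conn G e f].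

Definition components (G : graph) : {fset graph} := [fset comp G e | e in G].

Definition Delta (G : graph) : nat := #|` components G|.

Definition ominus (G F : graph) : graph :=
  [fset e in G | vert (comp G e) `&` vert F == fset0].

Fixpoint vDeltaC (F : graph) (s : seq graph) : nat :=
  match s with
  | [::] => 0
  | H :: s' => Delta (ominus H F) + vDeltaC (F `|` H) s'
  end.
Definition vDelta (s : seq graph) : nat := vDeltaC fset0 s.

Definition unionG (s : seq graph) : graph := foldr fsetU fset0 s.

(* join trees: leaves carry an edge (Some i) or the empty graph (None);
   labels of non-leaves are unions of children's labels (computed). *)
Inductive jtree := Leaf of option int | Node of jtree & jtree.

Fixpoint jlabel (S : jtree) : graph :=
  match S with
  | Leaf (Some i) => [fset i]
  | Leaf None => fset0
  | Node l r => jlabel l `|` jlabel r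
  end.
(* S is a G-join tree iff jlabel S = G. *)

(* {{T_1,...,T_m}} (fuel = length of the list) *)
Fixpoint multi_fuel (n : nat) (s : seq jtree) : jtree :=
  match n with
  | 0 => Leaf None
  | n'.+1 =>
    match s with
    | [::] => Leaf None
    | [:: t] => t
    | _ => Node (multi_fuel n' (take (size s).-1 s))
                (multi_fuel n' (rcons (take (size s).-2 s) (last (Leaf None) s)))
    end
  end.
Definition multi (s : seq jtree) : jtree := multi_fuel (size s) s.

Fixpoint jrelab (H : graph) (S : jtree) : jtree :=
  match S with
  | Leaf (Some i) => if i \in H then Leaf (Some i) else Leaf None
  | Leaf None => Leaf None
  | Node l r => Node (jrelab H l) (jrelab H r)
  end.
Definition jominus (S : jtree) (F : graph) : jtree := jrelab (ominus (jlabel S) F) S.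

Fixpoint branch_covs (S : jtree) : seq (seq graph) :=
  match S with
  | Leaf o => [:: [:: jlabel (Leaf o)]]
  | Node l r => [seq jlabel r :: c | c <- branch_covs l]
                ++ [seq jlabel l :: c | c <- branch_covs r]
  end.

(* Psi(S): max over coverings (as sets: undup) and their enumerations
   without repetition (permutations of the duplicate-free list) *)
Definition Psi (S : jtree) : nat :=
  \max_(c <- branch_covs S) \max_(p <- permutations (undup c)) vDelta p.

(* shift permutations of [m] = {1..m}, as functions nat -> nat *)
Definition shift_perm (m : nat) (sigma : nat -> nat) : Prop :=
  [/\ (forall j, 1 <= j <= m -> 1 <= sigma j <= m)%N,
      {in [pred j | 1 <= j <= m]%N &, injective sigma} &
      (forall j, 1 <= j <= m -> j.-1 <= sigma j)%N].

(* I subset of [m] with m in I (as a list, read as a set) *)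
Definition valid_I (m : nat) (I : seq nat) : bool :=
  all (fun i => 1 <= i <= m)%N I && (m \in I).

(* sigma_I(j) = i_h if j = i_{h-1}+1 (i_0 = 0), else j-1 *)
Definition sigmaI (I : seq nat) (j : nat) : nat :=
  if (j.-1 == 0)%N || (j.-1 \in I)
  then \big[minn/foldr maxn 0 I]_(i <- I | (j <= i)%N) i
  else j.-1.

Definition prevI (I : seq nat) (j : nat) : nat := \big[maxn/0]_(i <- I | (i < j)%N) i.

Definition Itilde (I : seq nat) (j : nat) : seq nat :=
  if j \in I then I ++ iota 1 (prevI I j) else I ++ iota 1 j.-1.

(* Main.v *)
Require Import Defs.
From mathcomp Require Import all_boot all_order all_algebra.
From mathcomp Require Import finmap.
Import GRing.Theory Num.Theory.
From mathcomp Require Import zify.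
Require Import Defs.
Set Implicit Arguments. Unset Strict Implicit. Unset Printing Implicit Defensive.
Import Order.TTheory GRing.Theory Num.Theory.

Definition xIg (L : seq nat) k := \big[minn/foldr maxn 0 L]_(i <- L | (k <= i)%N) i.

Lemma sigmaI_E L k : sigmaI L k = if (k.-1 == 0)%N || (k.-1 \in L) then xIg L k else k.-1.
Proof. by []. Qed.

Lemma foldr_max_ub (L : seq nat) i : i \in L -> (i <= foldr maxn 0 L)%N.
Proof.
elim: L => [|a L IH] //=; rewrite inE => /orP[/eqP ->|H].
  exact: leq_maxl.
exact: leq_trans (IH H) (leq_maxr _ _).
Qed.

Lemma foldr_max_mem (L : seq nat) : L != [::] -> foldr maxn 0 L \in L.
Proof.
elim: L => [|a L IH] //= _; case: L IH => [|b L] IH.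
  by rewrite /= maxn0 inE.
have := IH isT; set M := foldr maxn 0 (b :: L) => H.
rewrite inE; case: (leqP a M) => Hl.
  by rewrite H orbT.
by rewrite eqxx.
Qed.

Lemma bigmin_spec (L : seq nat) (P : pred nat) d :
  (\big[minn/d]_(i <- L | P i) i = d \/
     (\big[minn/d]_(i <- L | P i) i \in L /\ P (\big[minn/d]_(i <- L | P i) i))) /\
  (forall i, i \in L -> P i -> (\big[minn/d]_(i <- L | P i) i <= i)%N).
Proof.
elim: L => [|a L [IH1 IH2]]; first by rewrite big_nil; split => //; left.
rewrite big_cons; case: ifP => Pa.
  split.
    case: (leqP a (\big[minn/d]_(i <- L | P i) i)) => Hl.
      by right; rewrite inE eqxx Pa.
    case: IH1 => [->|[H1 H2]]; first by left.
    by right; rewrite inE H1 orbT.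
  move=> i; rewrite inE => /orP[/eqP ->|Hi] Pi; first exact: geq_minl.
  exact: leq_trans (geq_minr _ _) (IH2 _ Hi Pi).
split.
  case: IH1 => [->|[H1 H2]]; first by left.
  by right; rewrite inE H1 orbT.
move=> i; rewrite inE => /orP[/eqP ->|Hi] Pi; first by rewrite Pa in Pi.
exact: IH2.
Qed.

Section XI.
Variable (m : nat) (L : seq nat).
Hypothesis HL : valid_I m L.

Lemma valid_mem i : i \in L -> (1 <= i <= m)%N.
Proof. by case/andP: HL => /allP H _; apply: H. Qed.

Lemma valid_m : m \in L.
Proof. by case/andP: HL. Qed.

Lemma xIg_spec k : (1 <= k <= m)%N ->
  [/\ xIg L k \in L, (k <= xIg L k)%N & forall i, i \in L -> (k <= i)%N -> (xIg L k <= i)%N].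
Proof.
move=> Hk; have [[E|[H1 H2]] H3] := bigmin_spec L (fun i => k <= i)%N (foldr maxn 0 L).
- rewrite /xIg E; split.
  + by apply: foldr_max_mem; apply/eqP => E2; have := valid_m; rewrite E2.
  + apply: leq_trans (foldr_max_ub valid_m); lia.
  + by move=> i Hi Hki; rewrite -E; exact: H3.
- by split.
Qed.

Lemma xIg_uniq k y : (1 <= k <= m)%N -> y \in L -> (k <= y)%N ->
  (forall i, i \in L -> (k <= i)%N -> (y <= i)%N) -> xIg L k = y.
Proof.
move=> Hk Hy Hky Hmin; have [X1 X2 X3] := xIg_spec Hk.
apply/eqP; rewrite eqn_leq X3 //= Hmin //.
Qed.

Lemma xIg_range k : (1 <= k <= m)%N -> (k <= xIg L k <= m)%N.
Proof.
move=> Hk; have [X1 X2 X3] := xIg_spec Hk; rewrite X2 /=.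
by have := valid_mem X1; case/andP.
Qed.

Lemma xIg_m : xIg L m = m.
Proof.
have Hm : (1 <= m)%N by have := valid_mem valid_m; case/andP.
apply: xIg_uniq; rewrite ?Hm ?leqnn ?valid_m //.
Qed.

Lemma xIg_pred k : (2 <= k <= m)%N ->
  xIg L k.-1 = if k.-1 \in L then k.-1 else xIg L k.
Proof.
move=> Hk; have Hk1 : (1 <= k.-1 <= m)%N by lia.
have Hk2 : (1 <= k <= m)%N by lia.
case: ifP => Hin.
  by apply: xIg_uniq => //; move=> i _.
have [Y1 Y2 Y3] := xIg_spec Hk2.
apply: xIg_uniq => //; first by lia.
move=> i Hi Hki; apply: Y3 => //.
case: (eqVneq i k.-1) => [E|Hne]; first by rewrite -E Hi in Hin.
lia.
Qed.

Lemma sigmaI_range k : (1 <= k <= m)%N -> (1 <= sigmaI L k <= m)%N.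
Proof.
move=> Hk; rewrite sigmaI_E; case: ifP => H.
  by have := xIg_range Hk; lia.
by move: H; case: k Hk => [|[|k]] //= Hk; lia.
Qed.

End XI.

Lemma valid_ext m I p : valid_I m I -> (p < m)%N -> valid_I m (I ++ iota 1 p).
Proof.
move=> /andP [/allP H1 H2] Hp; rewrite /valid_I all_cat mem_cat H2 /= andbT.
apply/andP; split; first by apply/allP.
apply/allP => i; rewrite mem_iota; lia.
Qed.

Section Tilde.
Variable (m : nat) (I : seq nat) (p : nat).
Hypothesis HI : valid_I m I.
Hypothesis Hp : (p < m)%N.
Let L' := I ++ iota 1 p.
Let HL' : valid_I m L' := valid_ext HI Hp.

Lemma xIt_low k : (1 <= k <= p)%N -> xIg L' k = k.
Proof.
move=> Hk; apply: (xIg_uniq HL') => //; first lia.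
  by rewrite mem_cat mem_iota; apply/orP; right; lia.
Qed.

Lemma xIt_high k : (p < k <= m)%N -> xIg L' k = xIg I k.
Proof.
move=> Hk; have Hk' : (1 <= k <= m)%N by lia.
have [X1 X2 X3] := xIg_spec HI Hk'.
apply: (xIg_uniq HL') => //; first by rewrite mem_cat X1.
move=> i; rewrite mem_cat mem_iota => /orP[Hi|Hi] Hki; first exact: X3.
lia.
Qed.

Lemma sigt_low k : (1 <= k <= p)%N -> sigmaI L' k = k.
Proof.
move=> Hk; rewrite sigmaI_E xIt_low //.
case: k Hk => [|[|k]] //= Hk.
by rewrite mem_cat mem_iota; case: ifP => //; rewrite orbC; move/negbT; lia.
Qed.

Lemma sigt_mid : sigmaI L' p.+1 = xIg I p.+1.
Proof.
rewrite sigmaI_E /= xIt_high; last lia.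
have -> : (p == 0%N) || (p \in L').
  rewrite /L' mem_cat mem_iota; case: (p) => [|p'] //=.
  by apply/orP; right; lia.
done.
Qed.

Lemma sigt_high k : (p.+2 <= k <= m)%N -> sigmaI L' k = sigmaI I k.
Proof.
move=> Hk; rewrite !sigmaI_E xIt_high; last lia.
have -> : (k.-1 \in L') = (k.-1 \in I).
  by rewrite mem_cat mem_iota; case: (k.-1 \in I) => //=; lia.
done.
Qed.

End Tilde.

Local Open Scope fset_scope.

Definition adj (a b : int) : bool := ((a - 1 <= b) && (b <= a + 1))%R.

Lemma vertP (X : graph) v : (v \in vert X) = (v \in X) || ((v + 1)%R \in X).
Proof.
rewrite /vert in_fsetU; congr (_ || _); apply/imfsetP/idP => [[i Hi ->]|H].
  by rewrite subrK.
by exists (v + 1)%R => //; rewrite addrK.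
Qed.

Lemma disjvP (X Y : graph) :
  reflect (forall a b, a \in X -> b \in Y -> ~~ adj a b) (vert X `&` vert Y == fset0).
Proof.
apply: (iffP eqP) => [H a b Ha Hb|H].
  apply/negP => Hab.
  have: (forall v, v \in vert X -> v \in vert Y -> False).
    by move=> v HX HY; have := in_fset0 v; rewrite -H in_fsetI HX HY.
  move=> K; rewrite /adj in Hab.
  have [Hb1|[Hb1|Hb1]] : b = a \/ (b = a + 1)%R \/ (b = a - 1)%R by lia.
  - by subst b; apply: (K a); rewrite vertP ?Ha ?Hb.
  - by apply: (K a); rewrite vertP ?Ha //= -Hb1 Hb orbT.
  - by apply: (K b); rewrite vertP ?Hb //= Hb1 subrK Ha orbT.
apply/fsetP => v; rewrite in_fset0 in_fsetI !vertP.
case HX: (v \in X); case HX1: ((v+1)%R \in X); case HY: (v \in Y);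
  case HY1: ((v+1)%R \in Y) => //=.
all: first [ by have := H _ _ HX HY; rewrite /adj; lia
           | by have := H _ _ HX HY1; rewrite /adj; lia
           | by have := H _ _ HX1 HY; rewrite /adj; lia
           | by have := H _ _ HX1 HY1; rewrite /adj; lia ].
Qed.

Definition betw (e f k : int) : bool :=
  ((Order.min e f <= k) && (k <= Order.max e f))%R.

Lemma mem_segment e f k : (k \in segment e f) = betw e f k.
Proof.
rewrite /segment /betw; apply/mapP/idP => [[n]|H].
  rewrite mem_iota => /andP[_ Hn] ->; lia.
exists (`|k - Order.min e f|%N); first by rewrite mem_iota; lia.
lia.
Qed.

Lemma connP (G : graph) (e f : int) : reflect (forall k, betw e f k -> k \in G) (conn G e f).
Proof.
apply: (iffP allP) => H k Hk; apply: H; by rewrite ?mem_segment in Hk *.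
Qed.

Lemma conn_sym (G : graph) (e f : int) : conn G e f = conn G f e.
Proof.
apply/connP/connP => H k Hk; apply: H; move: Hk; rewrite /betw; lia.
Qed.

Lemma conn_trans (G : graph) (e f : int) g : conn G e f -> conn G f g -> conn G e g.
Proof.
move=> /connP H1 /connP H2; apply/connP => k Hk.
have [Hk1|Hk2] : betw e f k \/ betw f g k by move: Hk; rewrite /betw; lia.
  exact: H1. exact: H2.
Qed.

Lemma conn_refl (G : graph) e : e \in G -> conn G e e.
Proof. move=> He; apply/connP => k; rewrite /betw => Hk.
have -> : k = e by lia. done. Qed.

Lemma conn_mono (G G' : graph) e f : G `<=` G' -> conn G e f -> conn G' e f.
Proof. move=> /fsubsetP S /connP H; apply/connP => k Hk; apply/S/H/Hk. Qed.

Lemma conn_memr (G : graph) (e f : int) : conn G e f -> f \in G.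
Proof. move=> /connP; apply; rewrite /betw; lia. Qed.

Lemma conn_meml (G : graph) (e f : int) : conn G e f -> e \in G.
Proof. move=> /connP; apply; rewrite /betw; lia. Qed.

Lemma conn_adj (G : graph) (e f : int) : e \in G -> f \in G -> adj e f -> conn G e f.
Proof.
move=> He Hf Ha; apply/connP => k; rewrite /betw => Hk.
have [->|->] : k = e \/ k = f by move: Ha; rewrite /adj; lia.
  done. done.
Qed.

Lemma mem_comp (G : graph) (e f : int) : (f \in comp G e) = conn G e f.
Proof.
rewrite /comp !inE /=; apply/andP/idP => [[]//|H]; split => //.
exact: conn_memr H.
Qed.

Lemma comp_eq (G : graph) (e f : int) : conn G e f -> comp G f = comp G e.
Proof.
move=> H; apply/fsetP => g; rewrite !mem_comp; apply/idP/idP => H2.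
  exact: conn_trans H H2.
by apply: conn_trans H2; rewrite conn_sym.
Qed.

Lemma mem_ominus (G F : graph) (e : int) :
  (e \in ominus G F) = (e \in G) && (vert (comp G e) `&` vert F == fset0).
Proof. by rewrite /ominus !inE. Qed.

Lemma ominus_sub (G F : graph) : ominus G F `<=` G.
Proof. by apply/fsubsetP => e; rewrite mem_ominus => /andP[]. Qed.

Lemma ominus_closed (G F : graph) (e f : int) : e \in ominus G F -> conn G e f -> f \in ominus G F.
Proof.
rewrite !mem_ominus => /andP[He Hd] Hc; rewrite (comp_eq Hc) Hd andbT.
exact: conn_memr Hc.
Qed.

Lemma adj_refl e : adj e e.
Proof. rewrite /adj; lia. Qed.

Lemma ominus_sub0 (X F : graph) : X `<=` F -> ominus X F = fset0.
Proof.
move=> /fsubsetP S; apply/fsetP => e; rewrite in_fset0 mem_ominus.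
apply/negP => /andP[He /disjvP D].
have := D e e; rewrite mem_comp conn_refl // adj_refl => /(_ isT (S _ He)) //.
Qed.

Lemma Delta0 : Delta fset0 = 0%N.
Proof.
rewrite /Delta /components.
suff -> : [fset comp fset0 e | e in (fset0 : graph)] = fset0 by rewrite cardfs0.
by apply/fsetP => x; rewrite in_fset0; apply/imfsetP => [[e]]; rewrite inE.
Qed.

Lemma walk (P : int -> Prop) e f : P e ->
  (forall k, betw e f k -> k != e ->
     P (if (e <= k)%R then k - 1 else k + 1)%R -> P k) ->
  forall k, betw e f k -> P k.
Proof.
move=> P0 Hs.
suff: forall n k, `|(k - e)%R|%N = n -> betw e f k -> P k.
  by move=> H k; apply: H.
elim=> [|n IH] k Hn Hk.
  by have -> : k = e by lia.
have Hne : k != e by apply/eqP => E; subst; lia.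
apply: Hs => //; apply: IH.
  by case: ifP => HH; lia.
by move: Hk; rewrite /betw; case: ifP => HH; lia.
Qed.

Lemma adj_step e k : k != e -> adj (if (e <= k)%R then k - 1 else k + 1)%R k.
Proof. by rewrite /adj; case: ifP => _; lia. Qed.

Lemma ominus_junk (H H' F : graph) :
  H `<=` H' -> H' `<=` H `|` F -> ominus H' F = ominus H F.
Proof.
move=> /fsubsetP S1 /fsubsetP S2.
apply/fsetP => e; rewrite !mem_ominus; apply/andP/andP.
  move=> [He' /disjvP D]; split.
    have := S2 _ He'; rewrite in_fsetU => /orP[//|HF].
    by have := D e e; rewrite mem_comp conn_refl // adj_refl => /(_ isT HF).
  apply/disjvP => a b Ha Hb; apply: D => //; move: Ha; rewrite !mem_comp.
  by apply: conn_mono; apply/fsubsetP.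
move=> [He /disjvP D]; split; first exact: S1.
apply/disjvP => a b Ha Hb; rewrite mem_comp in Ha.
suff Hae : a \in comp H e by exact: D Hae Hb.
rewrite mem_comp.
have Hw : forall k, betw e a k -> conn H e k.
  apply: walk; first exact: conn_refl.
  move=> k Hk Hne Hc.
  have : k \in H' by move/connP: Ha; apply.
  move/S2; rewrite in_fsetU => /orP[HkH|HkF].
    have Hm := conn_memr Hc; eapply conn_trans; first exact: Hc.
    apply: conn_adj => //.
    exact: adj_step.
  have Hc' : (if (e <= k)%R then k - 1 else k + 1)%R \in comp H e by rewrite mem_comp.
  by have := D _ _ Hc' HkF; rewrite adj_step.
by apply: Hw; rewrite /betw; lia.
Qed.

Lemma Delta_closed (X Y : graph) : X `<=` Y ->
  (forall e f, e \in X -> conn Y e f -> f \in X) -> (Delta X <= Delta Y)%N.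
Proof.
move=> /fsubsetP S Cl; rewrite /Delta; apply: fsubset_leq_card.
apply/fsubsetP => C /imfsetP [e /= He ->]; apply/imfsetP; exists e => /=.
  exact: S.
apply/fsetP => f; rewrite !mem_comp; apply/idP/idP.
  by apply: conn_mono; apply/fsubsetP.
move=> Hc; apply/connP => k Hk; apply: (Cl e) => //.
apply/connP => k' Hk'; move/connP: Hc; apply; move: Hk Hk'; rewrite /betw; lia.
Qed.

Lemma Delta_ominus_relab (G F A B : graph) : A `<=` G -> B `<=` G ->
  let H := ominus G F in
  (Delta (ominus (B `&` H) (A `&` H)) <= Delta (ominus B (F `|` A)))%N.
Proof.
move=> /fsubsetP SA /fsubsetP SB; set H := ominus G F; rewrite /=.
have HG : H `<=` G by exact: ominus_sub.
have H2 : forall e f, e \in H -> conn B e f -> conn (B `&` H) e f.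
  move=> e f He Hc; apply/connP => k Hk; rewrite in_fsetI.
  have HkB : k \in B by move/connP: Hc; apply.
  rewrite HkB /=; apply: (ominus_closed He).
  apply/connP => k' Hk'; apply: SB; move/connP: Hc; apply.
  move: Hk Hk'; rewrite /betw; lia.
apply: Delta_closed.
  apply/fsubsetP => e; rewrite !mem_ominus in_fsetI => /andP[/andP[HeB HeH] /disjvP D].
  rewrite HeB /=; apply/disjvP => a b Ha Hb; rewrite mem_comp in Ha.
  have HaH : a \in H.
    apply: (ominus_closed HeH); apply: conn_mono Ha; apply/fsubsetP => x /SB //.
  have Ha' : a \in comp (B `&` H) e by rewrite mem_comp; exact: H2.
  move: Hb; rewrite in_fsetU => /orP[HbF|HbA].
    move: HaH; rewrite mem_ominus => /andP[_ /disjvP D2].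
    by apply: D2 => //; rewrite mem_comp conn_refl // SB // (conn_memr Ha).
  apply/negP => Hab.
  suff HbH : b \in H.
    by have := D a b Ha'; rewrite in_fsetI HbA HbH Hab => /(_ isT).
  apply: (ominus_closed HaH); apply: conn_adj => //.
    by apply: SB; exact: conn_memr Ha.
  exact: SA.
move=> e f He Hc.
have HeH : e \in H.
  by move: He; rewrite mem_ominus in_fsetI => /andP[/andP[]].
apply: (ominus_closed He); apply: H2 => //.
apply: conn_mono Hc; exact: ominus_sub.
Qed.


Lemma in_unionG e s : (e \in unionG s) = has (fun X : graph => e \in X) s.
Proof. by elim: s => [|X s IH] /=; rewrite ?in_fset0 // in_fsetU IH. Qed.

Lemma unionG_cat s t : unionG (s ++ t) = unionG s `|` unionG t.
Proof. by elim: s => [|X s IH] /=; rewrite ?fset0U // IH fsetUA. Qed.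

Lemma unionG_sub (X : graph) s : X \in s -> X `<=` unionG s.
Proof.
move=> Hx; apply/fsubsetP => e He; rewrite in_unionG; apply/hasP; by exists X.
Qed.

Lemma vDC_cat F s t : vDeltaC F (s ++ t) = (vDeltaC F s + vDeltaC (F `|` unionG s) t)%N.
Proof.
elim: s F => [|X s IH] F /=; first by rewrite fsetU0.
by rewrite IH addnA fsetUA.
Qed.

Lemma vDC_filter F (P : pred graph) s :
  (forall y, y \in s -> ~~ P y -> y `<=` F) -> vDeltaC F (filter P s) = vDeltaC F s.
Proof.
elim: s F => [|y s IH] F //= H.
case: ifP => Py /=.
  congr (_ + _)%N; apply: IH => z Hz Pz.
  apply: fsubset_trans (H z _ Pz) _; first by rewrite inE Hz orbT.
  exact: fsubsetUl.
have Hy : y `<=` F by apply: H; rewrite ?inE ?eqxx ?Py.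
rewrite ominus_sub0 // Delta0 add0n (fsetUidPl _ _ Hy).
apply: IH => z Hz; apply: H; by rewrite inE Hz orbT.
Qed.

Fixpoint fundup (s : seq graph) : seq graph :=
  if s is x :: s' then x :: [seq y <- fundup s' | y != x] else [::].

Lemma mem_fundup s : fundup s =i s.
Proof.
elim: s => [|x s IH] //= y; rewrite !inE mem_filter IH.
by case: eqP.
Qed.

Lemma fundup_uniq s : uniq (fundup s).
Proof.
elim: s => [|x s IH] //=; rewrite mem_filter eqxx /=.
exact: filter_uniq.
Qed.

Lemma vDC_fundup F s : vDeltaC F (fundup s) = vDeltaC F s.
Proof.
elim: s F => [|x s IH] F //=; congr (_ + _)%N.
rewrite vDC_filter ?IH // => y _; rewrite negbK => /eqP ->; exact: fsubsetUr.
Qed.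

Lemma bigmax_attained (T : eqType) (s : seq T) (f : T -> nat) :
  \max_(x <- s) f x = 0%N \/ exists2 x, x \in s & \max_(x <- s) f x = f x.
Proof.
elim: s => [|y s IH]; first by left; rewrite big_nil.
rewrite big_cons; case: IH => [->|[x Hx ->]].
  by right; exists y; rewrite ?inE ?eqxx // maxn0.
case: (leqP (f y) (f x)) => H.
  by right; exists x; rewrite ?inE ?Hx ?orbT // (maxn_idPr H).
by right; exists y; rewrite ?inE ?eqxx // (maxn_idPl (ltnW H)).
Qed.

Lemma covs_nonempty S : exists c, c \in branch_covs S.
Proof.
elim: S => [o|l [c Hc] r _]; first by exists [:: jlabel (Leaf o)]; rewrite inE.
exists (jlabel r :: c); rewrite mem_cat; apply/orP; left.
by apply/mapP; exists c.
Qed.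

Lemma cov_union S c : c \in branch_covs S -> unionG c = jlabel S.
Proof.
elim: S c => [o|l IHl r IHr] c /=; first by rewrite inE => /eqP -> /=; rewrite fsetU0.
rewrite mem_cat => /orP[] /mapP [c' Hc' ->] /=.
  by rewrite IHl // fsetUC.
by rewrite IHr.
Qed.

Lemma cov_sub S c X : c \in branch_covs S -> X \in c -> X `<=` jlabel S.
Proof. by move=> Hc HX; rewrite -(cov_union Hc); apply: unionG_sub. Qed.

Lemma psi_ge S c p : c \in branch_covs S -> {subset p <= c} -> (vDelta p <= Psi S)%N.
Proof.
move=> Hc Hp.
set r := fundup p ++ [seq y <- undup c | y \notin p].
have Hr : r \in permutations (undup c).
  rewrite mem_permutations; apply: uniq_perm.
  - rewrite cat_uniq fundup_uniq filter_uniq ?undup_uniq //= andbT.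
    apply/hasP => [[y]]; rewrite mem_filter mem_fundup => /andP[Hy _] Hy2.
    by rewrite Hy2 in Hy.
  - exact: undup_uniq.
  move=> y; rewrite mem_cat mem_filter mem_fundup mem_undup.
  by case Hy: (y \in p) => //=; rewrite Hp.
apply: (@leq_trans (vDelta r)).
  by rewrite /vDelta vDC_cat vDC_fundup leq_addr.
rewrite /Psi.
apply: (@leq_trans (\max_(p0 <- permutations (undup c)) vDelta p0)).
  exact: (@leq_bigmax_seq _ _ xpredT (fun p => vDelta p) _ Hr isT).
exact: (@leq_bigmax_seq _ _ xpredT
  (fun c => \max_(p0 <- permutations (undup c)) vDelta p0) _ Hc isT).
Qed.

Lemma psi_attained S : exists2 c, c \in branch_covs S &
  exists2 q, {subset q <= c} & Psi S = vDelta q.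
Proof.
rewrite /Psi.
case: (bigmax_attained (branch_covs S)
  (fun c => \max_(p <- permutations (undup c)) vDelta p)) => [->|[c Hc ->]].
  have [c Hc] := covs_nonempty S; exists c => //; by exists [::].
exists c => //.
case: (bigmax_attained (permutations (undup c)) vDelta) => [->|[p Hp ->]].
  by exists [::].
exists p => // y Hy.
by move: Hp; rewrite mem_permutations => /perm_mem Hp; rewrite -mem_undup -Hp.
Qed.


Lemma jlabel_relab H S : jlabel (jrelab H S) = jlabel S `&` H.
Proof.
elim: S => [[i|]|l IHl r IHr] /=.
- case: ifP => Hi /=; apply/fsetP => x; rewrite !inE; case: eqP => // ->.
  by rewrite Hi. by rewrite Hi.
- by rewrite fset0I.
- by rewrite IHl IHr fsetIUl.
Qed.

Lemma covs_relab H S : branch_covs (jrelab H S) =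
  [seq [seq X `&` H | X <- c] | c <- branch_covs S].
Proof.
elim: S => [[i|]|l IHl r IHr] /=.
- case: ifP => Hi /=; congr [:: [:: _]]; apply/fsetP => x; rewrite !inE; case: eqP => // ->; by rewrite Hi.
- by rewrite fset0I.
- rewrite map_cat IHl IHr -!map_comp !jlabel_relab; congr (_ ++ _); exact: eq_map.
Qed.

Lemma vD_relab (G F : graph) q A : A `<=` G -> (forall X, X \in q -> X `<=` G) ->
  (vDeltaC (A `&` ominus G F) [seq X `&` ominus G F | X <- q] <= vDeltaC (F `|` A) q)%N.
Proof.
elim: q A => [|X q IH] A //= HA Hq.
have HX : X `<=` G by apply: Hq; rewrite inE eqxx.
apply: leq_add; first exact: Delta_ominus_relab.
rewrite -fsetIUl -fsetUA; apply: IH.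
  by rewrite fsubUset HA HX.
by move=> Y HY; apply: Hq; rewrite inE HY orbT.
Qed.

Lemma psi_relab S F : exists2 c, c \in branch_covs S &
  exists2 q, {subset q <= c} & (Psi (jominus S F) <= vDeltaC F q)%N.
Proof.
set H := ominus (jlabel S) F.
have [c'' Hc'' [q Hq ->]] := psi_attained (jominus S F).
move: Hc''; rewrite /jominus -/H covs_relab => /mapP [c Hc Ec''].
exists c => //.
pose rep y := nth fset0 c (index y [seq X `&` H | X <- c]).
have Hrep : forall y, y \in q -> rep y \in c /\ rep y `&` H = y.
  move=> y Hy; have := Hq _ Hy; rewrite Ec'' => Hy'.
  have Hi : (index y [seq X `&` H | X <- c] < size c)%N by rewrite -(size_map (fun X => X `&` H)) index_mem.
  split; first exact: mem_nth.
  rewrite /rep -(nth_map fset0 (fset0 `&` H) (fun X => X `&` H)) //.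
  exact: nth_index.
exists [seq rep y | y <- q].
  by move=> x /mapP [y Hy ->]; case: (Hrep y Hy).
have E : [seq X `&` H | X <- [seq rep y | y <- q]] = q.
  rewrite -map_comp -[RHS]map_id; apply/eq_in_map => y Hy /=.
  by case: (Hrep y Hy).
rewrite -{1}E.
rewrite /vDelta.
have := @vD_relab (jlabel S) F [seq rep y | y <- q] fset0 (fsub0set _).
rewrite fset0I fsetU0; apply.
move=> X /mapP [y Hy ->]; case: (Hrep y Hy) => Hc1 _.
exact: cov_sub Hc Hc1.
Qed.


Lemma unionG_rcons s X : unionG (rcons s X) = unionG s `|` X.
Proof. by rewrite -cats1 unionG_cat /= fsetU0. Qed.

Lemma iota_rcons a n : iota a n.+1 = rcons (iota a n) (a + n)%N.
Proof. by rewrite -addn1 iotaD cats1. Qed.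

Lemma mf_node n a b s : multi_fuel n.+1 [:: a, b & s] =
  Node (multi_fuel n (take (size s).+1 [:: a, b & s]))
       (multi_fuel n (rcons (take (size s) [:: a, b & s]) (last (Leaf None) [:: a, b & s]))).
Proof. by []. Qed.

Lemma multi_node (s : seq jtree) : (2 <= size s)%N ->
  multi s = Node (multi (take (size s).-1 s))
                 (multi (rcons (take (size s).-2 s) (last (Leaf None) s))).
Proof.
case: s => [|a [|b s]] //= _.
rewrite {1}/multi [size _]/= mf_node.
rewrite /multi size_rcons !size_takel ?leqnn; last by rewrite [size _]/= leqW // leqnSn.
congr Node.
by rewrite -[a :: take _ _]/(take (size s).+1 [:: a, b & s]) size_takel.
Qed.

Lemma vDC_junk F a n (f g : nat -> graph) :
  (forall k, (a <= k < a + n)%N -> f k `<=` g k /\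
      g k `<=` F `|` unionG [seq f i | i <- iota a (k - a).+1]) ->
  vDeltaC F (map g (iota a n)) = vDeltaC F (map f (iota a n)).
Proof.
elim: n a F => [|n IH] a F //= H.
have [H1 H2] : f a `<=` g a /\ g a `<=` F `|` (f a `|` fset0).
  by have := H a; rewrite subnn addnS leqnn leq_addr /=; apply.
rewrite fsetU0 in H2.
have E : F `|` g a = F `|` f a.
  apply/eqP; rewrite eqEfsubset fsubUset fsubsetUl H2 /= fsubUset fsubsetUl /=.
  by apply: fsubset_trans H1 (fsubsetUr _ _).
rewrite E (@ominus_junk (f a) (g a) F) //; last by rewrite fsetUC.
congr (_ + _)%N; apply: IH => k Hk.
have Hk' : (a <= k < a + n.+1)%N by lia.
have [L1 L2] := H k Hk'; split => //.
have E2 : (k - a = (k - a.+1).+1)%N by lia.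
by rewrite E2 /= fsetUA in L2.
Qed.

Section Tree.
Variable (m : nat) (T : nat -> jtree) (G : nat -> graph).
Hypothesis HT : forall j, (1 <= j <= m)%N -> jlabel (T j) = G j.

Definition Gs n := unionG [seq G k | k <- iota 1 n].

Lemma Gs_S n : Gs n.+1 = Gs n `|` G n.+1.
Proof. by rewrite /Gs iota_rcons map_rcons unionG_rcons add1n. Qed.

Lemma Gs0 : Gs 0 = fset0. Proof. by []. Qed.

Lemma Gs_mono a b : (a <= b)%N -> Gs a `<=` Gs b.
Proof.
move=> /subnKC <-; elim: (b - a)%N => [|d IH]; first by rewrite addn0.
by rewrite addnS Gs_S; apply: fsubset_trans IH (fsubsetUl _ _).
Qed.

Lemma G_Gs k n : (1 <= k <= n)%N -> G k `<=` Gs n.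
Proof.
move=> Hk; apply: unionG_sub; apply/mapP; exists k => //; rewrite mem_iota; lia.
Qed.

Definition Ml n x := [seq T k | k <- rcons (iota 1 n.-1) x].
Definition M n x := multi (Ml n x).

Lemma M1 x : M 1 x = T x.
Proof. by []. Qed.

Lemma M_succ n x : (1 <= n)%N -> M n.+1 x = Node (M n n) (M n x).
Proof.
move=> Hn; rewrite /M multi_node; last by rewrite size_map size_rcons size_iota.
rewrite /Ml size_map size_rcons size_iota /=.
congr (Node (multi _) (multi _)).
  rewrite -map_take -cats1 take_size_cat ?size_iota //.
  by case: n Hn => [|n] // _; rewrite iota_rcons.
have E1 : take n.-1 (rcons (iota 1 n) x) = iota 1 n.-1.
  rewrite -cats1 takel_cat ?size_iota ?leq_pred // take_iota.
  congr iota; lia.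
have E2 : last (Leaf None) [seq T k | k <- rcons (iota 1 n) x] = T x.
  by rewrite map_rcons last_rcons.
by rewrite E2 -map_take E1 map_rcons.
Qed.

Lemma M_label n x : (1 <= n <= m)%N -> (1 <= x <= m)%N -> jlabel (M n x) = Gs n.-1 `|` G x.
Proof.
elim: n x => [//|n IH] x Hn Hx.
case: n IH Hn => [|n] IH Hn; first by rewrite M1 HT // fset0U.
rewrite M_succ //= !IH //; try lia.
rewrite Gs_S.
apply/fsetP => e; rewrite !in_fsetU.
by case: (e \in Gs n); case: (e \in G n.+1); case: (e \in G x).
Qed.

Lemma multi_top : (1 <= m)%N -> multi [seq T k | k <- iota 1 m] = M m m.
Proof. by case: m => [|m'] // _; rewrite /M /Ml iota_rcons. Qed.

Lemma bottom_cov n x c : (1 <= n)%N -> c \in branch_covs (T x) ->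
  exists2 cb, cb ++ c \in branch_covs (M n x) &
     forall k, (1 <= k < n)%N -> jlabel (M k k) \in cb.
Proof.
move=> Hn Hc; elim: n Hn => [//|n IH] Hn.
case: n IH Hn => [|n] IH Hn; first by exists [::] => // k; lia.
have [cb Hcb Hm] := IH isT.
exists (jlabel (M n.+1 n.+1) :: cb).
  rewrite (@M_succ n.+1 x) // /= mem_cat; apply/orP; right; apply/mapP; by exists (cb ++ c).
move=> k Hk; rewrite inE; case: (eqVneq k n.+1) => [->|Hne]; first by rewrite eqxx.
by rewrite Hm ?orbT //; lia.
Qed.

End Tree.


Lemma unionG_Gs (G : nat -> graph) n : unionG [seq Gs G k | k <- iota 1 n] = Gs G n.
Proof.
elim: n => [//|n IH]; rewrite iota_rcons map_rcons unionG_rcons IH add1n.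
by apply/fsetUidPr; apply: Gs_mono.
Qed.

Section Main.
Variable (m : nat) (T : nat -> jtree) (G : nat -> graph) (I : seq nat).
Hypothesis HT : forall j, (1 <= j <= m)%N -> jlabel (T j) = G j.
Hypothesis HI : valid_I m I.

Let sig k := sigmaI I k.
Let xI k := xIg I k.
Definition U k := unionG [seq G (sigmaI I i) | i <- iota 1 k].

Lemma sig_cases k : (2 <= k <= m)%N -> sig k = if k.-1 \in I then xI k else k.-1.
Proof. by move=> Hk; rewrite /sig sigmaI_E; have -> : (k.-1 == 0%N) = false by lia. Qed.

Lemma sig1 : sig 1 = xI 1.
Proof. by rewrite /sig sigmaI_E. Qed.

Lemma U_S k : U k.+1 = U k `|` G (sig k.+1).
Proof. by rewrite /U iota_rcons map_rcons unionG_rcons add1n. Qed.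

Lemma U_eq k : (1 <= k <= m)%N -> U k = Gs G k.-1 `|` G (xI k).
Proof.
elim: k => [//|k IH] Hk.
case: k IH Hk => [|k] IH Hk.
  by rewrite U_S /U /= sig1 !fset0U.
rewrite U_S IH; last lia.
rewrite sig_cases; last lia.
have Hp := @xIg_pred m I HI k.+2; rewrite /= in Hp.
rewrite /xI Hp; last lia.
rewrite [k.+2.-1]/= Gs_S.
case: ifP => Hin.
  by [].
apply/fsetP => e; rewrite !in_fsetU.
by rewrite /=; case: (e \in Gs G k); case: (e \in G k.+1); case: (e \in G (xIg I k.+2)).
Qed.

Lemma sig_range k : (1 <= k <= m)%N -> (1 <= sig k <= m)%N.
Proof. exact: sigmaI_range. Qed.

Lemma xI_range k : (1 <= k <= m)%N -> (k <= xI k <= m)%N.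
Proof. exact: xIg_range. Qed.

Lemma top_cov d : forall n, (n + d = m)%N -> (1 <= n)%N ->
  forall c, c \in branch_covs (M T n (xI n)) ->
  exists2 ct, ct ++ c \in branch_covs (M T m m) &
    forall k, (n < k <= m)%N -> jlabel (M T k.-1 (sig k)) \in ct.
Proof.
elim: d => [|d IH] n Hnd Hn c Hc.
  rewrite addn0 in Hnd; subst n.
  exists [::]; first by rewrite /= /xI xIg_m in Hc.
  by move=> k; lia.
have Hn1 : (n.+1 + d = m)%N by lia.
have Hnm : (n.+1 <= m)%N by lia.
set sib := jlabel (M T n (sig n.+1)).
have Hc' : sib :: c \in branch_covs (M T n.+1 (xI n.+1)).
  rewrite M_succ // /= mem_cat.
  have Hp := @xIg_pred m I HI n.+1; rewrite /= in Hp.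
  have Hs := sig_cases (k := n.+1); rewrite /= in Hs.
  move: Hc; rewrite /xI Hp; last lia.
  rewrite /sib Hs; last lia.
  case: ifP => Hin Hc.
    by apply/orP; left; apply/mapP; exists c.
  by apply/orP; right; apply/mapP; exists c.
have [ct Hct Hm] := IH n.+1 Hn1 isT _ Hc'.
exists (ct ++ [:: sib]); first by rewrite -catA.
move=> k Hk; rewrite mem_cat; case: (eqVneq k n.+1) => [->|Hne].
  by rewrite /sib inE eqxx orbT.
by rewrite Hm //; lia.
Qed.

Lemma U_split h n : U h `|` unionG [seq G (sigmaI I i) | i <- iota h.+1 n] = U (h + n).
Proof. by rewrite /U iotaD map_cat unionG_cat add1n. Qed.

Definition top_list h := [seq jlabel (M T k.-1 (sigmaI I k)) | k <- iota h.+1 (m - h)].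

Lemma top_junk h : (1 <= h <= m)%N ->
  vDeltaC (U h) (top_list h) = vDeltaC (U h) [seq G (sigmaI I k) | k <- iota h.+1 (m - h)].
Proof.
move=> Hh; apply: vDC_junk => k Hk.
have Hk1 : (1 <= k <= m)%N by lia.
rewrite (M_label HT); [|lia|exact: sig_range].
split; first exact: fsubsetUr.
have -> : (k - h.+1).+1 = (k - h)%N by lia.
rewrite U_split.
have -> : (h + (k - h) = (k.-1).+1)%N by lia.
rewrite U_S U_eq; last lia.
have -> : (k.-1.+1 = k) by lia.
apply/fsubsetP => e; rewrite !in_fsetU /sig.
by case: (e \in Gs G k.-2) => //= ->; rewrite orbT.
Qed.

Lemma caseA h : (1 <= h <= m)%N -> (h == 1%N) || (h.-1 \in I) ->
  sig h = xI h /\ Itilde I (sig h) = I ++ iota 1 h.-1.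
Proof.
move=> Hh HA.
have Es : sig h = xI h.
  rewrite /sig /= sigmaI_E; have -> : (h.-1 == 0%N) = (h == 1%N) by case: (h) Hh => [|[|]].
  by case: ifP => // /negP; case.
split => //; rewrite Es /Itilde.
have [X1 X2 X3] := xIg_spec HI Hh.
rewrite /xI X1; congr (_ ++ iota 1 _).
apply/eqP; rewrite eqn_leq; apply/andP; split.
  apply/bigmax_leqP_seq => i Hi Hlt.
  case: (leqP h i) => Hih; last lia.
  by have := X3 i Hi Hih; lia.
case/orP: HA => [/eqP -> //|Hin].
apply: (@leq_bigmax_seq _ _ (fun i => i < xIg I h)%N (fun i => i) _ Hin).
lia.
Qed.

Lemma caseB h : (2 <= h <= m)%N -> h.-1 \notin I ->
  sig h = h.-1 /\ Itilde I (sig h) = I ++ iota 1 h.-2.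
Proof.
move=> Hh HB.
have Es : sig h = h.-1 by rewrite sig_cases // (negbTE HB).
by rewrite Es /Itilde (negbTE HB).
Qed.

Definition pre h := [seq G (sigmaI (Itilde I (sigmaI I h)) k) | k <- iota 1 h.-1].

Lemma tilde_split h : (1 <= h <= m)%N ->
  [seq G (sigmaI (Itilde I (sigmaI I h)) k) | k <- iota 1 m] =
  pre h ++ G (sigmaI I h) :: [seq G (sigmaI I k) | k <- iota h.+1 (m - h)].
Proof.
move=> Hh.
have Ei : iota 1 m = iota 1 h.-1 ++ h :: iota h.+1 (m - h).
  have -> : m = (h.-1 + (m - h).+1)%N by lia.
  rewrite iotaD /=; congr (_ ++ _ :: _); first lia.
  by congr iota; lia.
rewrite Ei map_cat /=; congr (_ ++ _ :: _).
  case HA : ((h == 1%N) || (h.-1 \in I)).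
    have [E1 E2] := caseA Hh HA; rewrite -/(sig h) E2.
    have Hp : (h.-1 < m)%N by lia.
    have Hm := @sigt_mid m I h.-1 HI Hp.
    have Hh0 : (0 < h)%N by lia.
    by rewrite (prednK Hh0) in Hm; rewrite Hm E1.
  have Hh2 : (2 <= h <= m)%N.
    have : h != 1%N by apply/negP => /eqP E; rewrite E in HA.
    lia.
  have HB : h.-1 \notin I by apply/negP => Hin; rewrite Hin orbT in HA.
  have [E1 E2] := caseB Hh2 HB; rewrite -/(sig h) E2.
  rewrite (sigt_high (m := m)) //; lia.
apply/eq_in_map => k; rewrite mem_iota => Hk.
case HA : ((h == 1%N) || (h.-1 \in I)).
  have [E1 E2] := caseA Hh HA; rewrite -/(sig h) E2.
  rewrite (sigt_high (m := m)) //; lia.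
have Hh2 : (2 <= h <= m)%N.
    have : h != 1%N by apply/negP => /eqP E; rewrite E in HA.
    lia.
have HB : h.-1 \notin I by apply/negP => Hin; rewrite Hin orbT in HA.
have [E1 E2] := caseB Hh2 HB; rewrite -/(sig h) E2.
rewrite (sigt_high (m := m)) //; lia.
Qed.

Lemma jlabel_Mkk k : (1 <= k <= m)%N -> jlabel (M T k k) = Gs G k.
Proof.
move=> Hk; rewrite (M_label HT) //.
by case: k Hk => [|k] // Hk; rewrite Gs_S.
Qed.

Definition cov_prop h mid := forall c, c \in branch_covs (T (sigmaI I h)) ->
  exists2 tot, tot \in branch_covs (M T m m) & {subset c ++ mid ++ top_list h <= tot}.

Lemma pathA h : (1 <= h <= m)%N -> (h == 1%N) || (h.-1 \in I) ->
  exists mid, [/\ cov_prop h mid, unionG mid = U h.-1 & vDelta mid = vDelta (pre h)].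
Proof.
move=> Hh HA; have [E1 E2] := caseA Hh HA.
have Hx := xI_range Hh.
have Epre : pre h = [seq G k | k <- iota 1 h.-1].
  rewrite /pre -/(sig h) E2; apply/eq_in_map => k; rewrite mem_iota => Hk.
  rewrite (sigt_low (m := m)) //; lia.
exists [seq jlabel (M T k k) | k <- iota 1 h.-1]; split.
- move=> c; rewrite -/(sig h) E1 => Hc.
  have Hh1 : (1 <= h)%N by lia.
  have [cb Hcb Hm] := bottom_cov (T := T) Hh1 Hc.
  have Hd : (h + (m - h) = m)%N by lia.
  have [ct Hct Hm2] := top_cov Hd Hh1 Hcb.
  exists (ct ++ (cb ++ c)) => // y; rewrite !mem_cat => /or3P [Hy|/mapP [k Hk ->]|/mapP [k Hk ->]].
  + by rewrite Hy !orbT.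
  + by rewrite Hm ?orbT //; move: Hk; rewrite mem_iota; lia.
  + by rewrite Hm2 //; move: Hk; rewrite mem_iota; lia.
- have -> : [seq jlabel (M T k k) | k <- iota 1 h.-1] = [seq Gs G k | k <- iota 1 h.-1].
    by apply/eq_in_map => k; rewrite mem_iota => Hk; apply: jlabel_Mkk; lia.
  rewrite unionG_Gs.
  case: h Hh HA {E1 E2 Hx Epre} => [|[|h]] // Hh HA.
  rewrite U_eq; last lia.
  have Hp := @xIg_pred m I HI h.+2; rewrite /= in Hp.
  have Hin : h.+1 \in I by case/orP: HA.
  by rewrite /xI /= Hp ?Hin ?Gs_S //; lia.
- rewrite Epre /vDelta; apply: vDC_junk => k Hk.
  rewrite jlabel_Mkk; last lia.
  split; first by apply: G_Gs; lia.
  have -> : (k - 1).+1 = k by lia.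
  by rewrite fset0U; exact: fsubset_refl.
Qed.

Lemma bot_junk n : (n <= m)%N ->
  vDelta [seq jlabel (M T k k) | k <- iota 1 n] = vDelta [seq G k | k <- iota 1 n].
Proof.
move=> Hn; rewrite /vDelta; apply: vDC_junk => k Hk.
rewrite jlabel_Mkk; last lia.
split; first by apply: G_Gs; lia.
have -> : (k - 1).+1 = k by lia.
by rewrite fset0U; exact: fsubset_refl.
Qed.

Lemma pathB h : (2 <= h <= m)%N -> h.-1 \notin I ->
  exists mid, [/\ cov_prop h mid, unionG mid = U h.-1 & vDelta mid = vDelta (pre h)].
Proof.
move=> Hh HB; have [E1 E2] := caseB Hh HB.
have Hh' : (1 <= h <= m)%N by lia.
have Hx := xI_range Hh'.
have Exp : xI h.-1 = xI h.
  have Hp := @xIg_pred m I HI h Hh; rewrite /xI /= Hp.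
  by rewrite (negbTE HB).
set sib := jlabel (M T h.-1 (xI h)).
exists ([seq jlabel (M T k k) | k <- iota 1 h.-2] ++ [:: sib]); split.
- move=> c; rewrite -/(sig h) E1 => Hc.
  have Hh1 : (1 <= h.-1)%N by lia.
  have [cb Hcb Hm] := bottom_cov (T := T) Hh1 Hc.
  have Hcb' : (sib :: cb) ++ c \in branch_covs (M T h (xI h)).
    have -> : h = (h.-1).+1 by lia.
    rewrite M_succ // /= mem_cat; apply/orP; left; apply/mapP; exists (cb ++ c) => //.
    by rewrite /sib prednK //; lia.
  have Hd : (h + (m - h) = m)%N by lia.
  have Hh0 : (1 <= h)%N by lia.
  have [ct Hct Hm2] := top_cov Hd Hh0 Hcb'.
  exists (ct ++ ((sib :: cb) ++ c)) => // y.
  rewrite !mem_cat => /or3P [Hy|/orP [/mapP [k Hk ->]|Hy]|/mapP [k Hk ->]].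
  + by rewrite Hy !orbT.
  + by rewrite inE Hm ?orbT //; move: Hk; rewrite mem_iota; lia.
  + by move: Hy; rewrite inE => /eqP ->; rewrite inE eqxx !orbT.
  + by rewrite Hm2 //; move: Hk; rewrite mem_iota; lia.
  rewrite unionG_cat /= fsetU0.
  have -> : [seq jlabel (M T k k) | k <- iota 1 h.-2] = [seq Gs G k | k <- iota 1 h.-2].
    by apply/eq_in_map => k; rewrite mem_iota => Hk; apply: jlabel_Mkk; lia.
  rewrite unionG_Gs U_eq; last lia.
  rewrite /sib (M_label HT); [|lia|lia].
  by rewrite Exp fsetUA fsetUid.
- have -> : pre h = [seq G k | k <- iota 1 h.-2] ++ [:: G (xI h)].
    rewrite /pre -/(sig h) E2.
    have -> : h.-1 = (h.-2).+1 by lia.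
    rewrite iota_rcons map_rcons -cats1; congr (_ ++ [:: _]).
      apply/eq_in_map => k; rewrite mem_iota => Hk.
      rewrite (sigt_low (m := m)) //; lia.
    rewrite add1n (sigt_mid (m := m)) //; last lia.
    by rewrite -Exp (_ : (h.-2).+1 = h.-1) //; lia.
  rewrite /vDelta !vDC_cat.
  have Hb := bot_junk (n := h.-2) ltac:(lia); rewrite /vDelta in Hb; rewrite Hb.
  congr (_ + _)%N.
  have -> : [seq jlabel (M T k k) | k <- iota 1 h.-2] = [seq Gs G k | k <- iota 1 h.-2].
    by apply/eq_in_map => k; rewrite mem_iota => Hk; apply: jlabel_Mkk; lia.
  rewrite unionG_Gs -/(Gs G h.-2) /= /sib (M_label HT); [|lia|lia].
  rewrite (@ominus_junk (G (xI h)) (Gs G h.-2 `|` G (xI h))) //.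
    exact: fsubsetUr.
  by rewrite fsetUC fset0U; exact: fsubset_refl.
Qed.

Lemma pre_union h : (1 <= h <= m)%N -> unionG (pre h) = U h.-1.
Proof.
move=> Hh.
case HA : ((h == 1%N) || (h.-1 \in I)).
  have [E1 E2] := caseA Hh HA.
  have -> : pre h = [seq G k | k <- iota 1 h.-1].
    rewrite /pre -/(sig h) E2; apply/eq_in_map => k; rewrite mem_iota => Hk.
    rewrite (sigt_low (m := m)) //; lia.
  rewrite -/(Gs G h.-1).
  case: h Hh HA {E1 E2} => [|[|h]] // Hh HA.
  rewrite U_eq; last lia.
  have Hp := @xIg_pred m I HI h.+2; rewrite /= in Hp.
  have Hin : h.+1 \in I by case/orP: HA.
  by rewrite /xI /= Hp ?Hin ?Gs_S //; lia.
have Hh2 : (2 <= h <= m)%N.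
  have : h != 1%N by apply/negP => /eqP E; rewrite E in HA.
  lia.
have HB : h.-1 \notin I by apply/negP => Hin; rewrite Hin orbT in HA.
have [E1 E2] := caseB Hh2 HB.
have Exp : xI h.-1 = xI h.
  have Hp := @xIg_pred m I HI h Hh2; rewrite /xI /= Hp.
  by rewrite (negbTE HB).
have -> : pre h = [seq G k | k <- iota 1 h.-2] ++ [:: G (xI h)].
  rewrite /pre -/(sig h) E2.
  have -> : h.-1 = (h.-2).+1 by lia.
  rewrite iota_rcons map_rcons -cats1; congr (_ ++ [:: _]).
    apply/eq_in_map => k; rewrite mem_iota => Hk.
    rewrite (sigt_low (m := m)) //; lia.
  rewrite add1n (sigt_mid (m := m)) //; last lia.
  by rewrite -Exp (_ : (h.-2).+1 = h.-1) //; lia.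
rewrite unionG_cat /= fsetU0 -/(Gs G h.-2) U_eq; last lia.
by rewrite Exp.
Qed.

Lemma path h : (1 <= h <= m)%N ->
  exists mid, [/\ cov_prop h mid, unionG mid = U h.-1 & vDelta mid = vDelta (pre h)].
Proof.
move=> Hh; case HA : ((h == 1%N) || (h.-1 \in I)); first exact: pathA.
have Hh2 : (2 <= h <= m)%N.
  have : h != 1%N by apply/negP => /eqP E; rewrite E in HA.
  lia.
have HB : h.-1 \notin I by apply/negP => Hin; rewrite Hin orbT in HA.
exact: pathB.
Qed.

Lemma U_h h : (1 <= h)%N -> U h = U h.-1 `|` G (sigmaI I h).
Proof. by case: h => [|h] // _; rewrite U_S. Qed.

Lemma main_ii h : (1 <= h <= m)%N ->
  (Psi (T (sigmaI I h)) + vDeltaC (U h) [seq G (sigmaI I k) | k <- iota h.+1 (m - h)]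
     <= Psi (M T m m))%N.
Proof.
move=> Hh; have [mid [Hcov Hum _]] := path Hh.
have [c Hc [q Hq Eq]] := psi_attained (T (sigmaI I h)).
have [tot Htot Hsub] := Hcov c Hc.
set p := q ++ (c ++ (mid ++ top_list h)).
have : (vDelta p <= Psi (M T m m))%N.
  apply: (psi_ge Htot) => y; rewrite mem_cat => /orP [Hy|Hy]; apply: Hsub => //.
  by rewrite mem_cat Hq.
apply: leq_trans.
rewrite /p /vDelta !vDC_cat -/(vDelta q) -Eq leq_add2l.
have Huc : unionG c = G (sigmaI I h).
  by rewrite (cov_union Hc) HT //; apply: sig_range; lia.
have -> : fset0 `|` unionG q `|` unionG c `|` unionG mid = U h.
  have Hqc : unionG q `<=` unionG c.
    apply/fsubsetP => e; rewrite !in_unionG => /hasP [X HX HeX]; apply/hasP.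
    by exists X => //; apply: Hq.
  rewrite fset0U (fsetUidPr _ _ Hqc) Huc Hum (U_h (h := h)); last lia.
  by rewrite fsetUC.
rewrite top_junk //.
by rewrite addnA leq_addl.
Qed.

Lemma main_iii h : (1 <= h <= m)%N ->
  ((Psi (jominus (T (sigmaI I h)) (U h.-1)))%:Z
     - (Delta (ominus (G (sigmaI I h)) (U h.-1)))%:Z
     + (vDelta [seq G (sigmaI (Itilde I (sigmaI I h)) k) | k <- iota 1 m])%:Z
   <= (Psi (M T m m))%:Z)%R.
Proof.
move=> Hh; have [mid [Hcov Hum Hvd]] := path Hh.
have [c Hc [q Hq Hle]] := psi_relab (T (sigmaI I h)) (U h.-1).
have [tot Htot Hsub] := Hcov c Hc.
set p := mid ++ (q ++ (c ++ top_list h)).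
have Hp : (vDelta p <= Psi (M T m m))%N.
  apply: (psi_ge Htot) => y; rewrite !mem_cat => /or4P [Hy|Hy|Hy|Hy]; apply: Hsub;
    rewrite !mem_cat ?Hy ?orbT //.
  by rewrite Hq ?orbT.
have Huc : unionG c = G (sigmaI I h).
  by rewrite (cov_union Hc) HT //; apply: sig_range; lia.
have Hqc : unionG q `<=` unionG c.
  apply/fsubsetP => e; rewrite !in_unionG => /hasP [X HX HeX]; apply/hasP.
  by exists X => //; apply: Hq.
have EUh : U h = U h.-1 `|` G (sigmaI I h) by rewrite (U_h (h := h)) //; lia.
move: Hp; rewrite /p /vDelta !vDC_cat -/(vDelta mid) Hvd fset0U Hum.
rewrite -fsetUA (fsetUidPr _ _ Hqc) Huc -EUh top_junk // => Hp.
rewrite tilde_split // /vDelta vDC_cat /= fset0U pre_union // -EUh.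
rewrite -/(vDelta (pre h)).
move: Hle Hp.
set a := Psi _; set P := vDelta _; set D := Delta _; set t := vDeltaC (U h) _.
set x := Psi _; set b := vDeltaC _ q; set cc := vDeltaC _ c.
move=> Hle Hp; lia.
Qed.

End Main.

Local Close Scope fset_scope.
Theorem lemma5p4 (m : nat) (T : nat -> jtree) (G : nat -> graph)
    (sigma : nat -> nat) (I : seq nat) (h : nat) :
  (forall j, (1 <= j <= m)%N -> jlabel (T j) = G j) ->
  shift_perm m sigma ->
  valid_I m I ->
  (forall j, (1 <= j <= m)%N -> sigma j = sigmaI I j) ->
  (1 <= h <= m)%N ->
  let TT := multi [seq T k | k <- iota 1 m] in
  [/\ (Psi (T (sigma 1%N)) +
         vDeltaC (G (sigma 1%N)) [seq G (sigma k) | k <- iota 2 m.-1] <= Psi TT)%N,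
      (Psi (T (sigma h)) +
         vDeltaC (unionG [seq G (sigma k) | k <- iota 1 h])
                 [seq G (sigma k) | k <- iota h.+1 (m - h)] <= Psi TT)%N &
      let j := sigma h in
      let F := unionG [seq G (sigma k) | k <- iota 1 h.-1] in
      ((Psi (jominus (T j) F))%:Z - (Delta (ominus (G j) F))%:Z
         + (vDelta [seq G (sigmaI (Itilde I j) k) | k <- iota 1 m])%:Z
       <= (Psi TT)%:Z)%R].
Proof.
move=> HT _ HI Hs Hh TT.
have Hm1 : (1 <= m)%N by lia.
have ETT : TT = M T m m by rewrite /TT multi_top.
have Emap : forall a n, (1 <= a)%N -> (a + n <= m.+1)%N ->
    [seq G (sigma k) | k <- iota a n] = [seq G (sigmaI I k) | k <- iota a n].
  move=> a n Ha Hn; apply/eq_in_map => k; rewrite mem_iota => Hk.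
  by rewrite Hs //; lia.
have E1 : sigma 1%N = sigmaI I 1 by rewrite Hs //; lia.
have Eh : sigma h = sigmaI I h by rewrite Hs //; lia.
rewrite ETT; split.
- rewrite E1 Emap; [|lia|lia].
  have := main_ii HT HI (h := 1%N) ltac:(lia).
  by rewrite /U /= fsetU0 subn1.
- rewrite Eh !Emap; [|lia|lia|lia|lia].
  exact: main_ii.
- rewrite /= Eh Emap; [|lia|lia].
  exact: main_iii.
Qed.
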